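(* Let $(a,b)\in\mathbb N^2$ be coprime and $k\ge1$ an integer. (1) If $(d_1,d_2)=(kab+1,kb^2)$ or $(d_1,d_2)=(ka^2,kab+1)$, then $(d_1,d_2)$ and $(ka,kb)$ satisfy the one-bending property. (2) Let $(d_1,d_2)\in\mathbb N^2$ with $d_1b-d_2a\ne0$ and put $m=|d_1b-d_2a|$. If $d_1\ge mka$ in the case $d_1b-d_2a<0$, or $d_2\ge mkb$ in the case $d_1b-d_2a>0$, then $(d_1,d_2)$ and $(ka,kb)$ satisfy the one-bending property. (3) For every integer $m>0$ there exist infinitely many $(d_1,d_2)\in\mathbb N^2$ such that $m=|d_1b-d_2a|$ and $(d_1,d_2)$ and $(ka,kb)$ satisfy the one-bending property.
   Context: Rank-2 scattering diagram: $\Bbbk$ a field of characteristic $0$, $M=\mathbb Z^2$ with basis $e_1,e_2$, $N=\operatorname{Hom}(M,\mathbb Z)$; positive integers $\ell_1,\ell_2$; independent variables $p_{i,k}$ ($i=1,2$, $1\le k\le\ell_i$); $\mathcal M$ their monoid of monomials; $\widehat R$ the completion of $\Bbbk[\mathcal M][x^{\pm1},y^{\pm1}]$ at the ideal generated by the $p_{i,k}$; $x^{(m_1,m_2)}=x^{m_1}y^{m_2}$. Walls: rays $b-\mathbb R_{\ge0}m_0$ or lines $b-\mathbb Rm_0$ ($m_0$ primitive) with functions $1+\sum_{k\ge1}c_kx^{km_0}$, $c_k$ in that ideal; crossing with velocity $v$ acts by $x^m\mapsto x^mf^{\langle n,m\rangle}$ ($n\in N$ primitive orthogonal to the wall, $\langle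 n,v\rangle<0$); consistency: trivial path-ordered products around regular loops. $\mathfrak D=\operatorname{Scat}(P_1,P_2)$, $P_1=1+\sum_{k=1}^{\ell_1}p_{1,k}x^k$, $P_2=1+\sum_{k=1}^{\ell_2}p_{2,k}y^k$: the consistent diagram (unique up to equivalence) made of the lines $(\mathbb Re_1,P_1)$, $(\mathbb Re_2,P_2)$ and rays, chosen with rays $\mathbb R_{\le0}(a,b)$ for distinct coprime $(a,b)\in\mathbb Z_{>0}^2$. A broken line for $m_0\in M\setminus\{0\}$ with endpoint $Q$ is a continuous piecewise linear $\beta:(-\infty,0]\to\mathbb R^2$ avoiding ray endpoints and wall intersections, with breakpoints $\tau_1<\dots<\tau_\ell<0$ and monomials $c_ix^{m_i}$ on linear pieces, $c_0=1$, $\beta(0)=Q$, $\dot\beta=-m_i$, transversal crossings at breakpoints, $c_ix^{m_i}$ a term other than $c_{i-1}x^{m_{i-1}}$ of $c_{i-1}x^{m_{i-1}}\prod_{\mathfrak d\ni\beta(\tau_i)}f_{\mathfrak d}^{\langle n,m_{i-1}\rangle}$ ($n$ primitive normal, $\langle n,m_{i-1}\rangle>0$); it bends at the $\beta(\tau_i)$; initial exponent $m_0$, final exponent $m_\ell$. One-bending property: for $(d_1,d_2)\in\mathbb N^2$, coprime $(a,b)\in\mathbb N^2$ with $d_1b-d_2a\ne0$, $k\ge1$, $(d_1,d_2)$ and $(ka,kb)$ satisfy it if every broken line in $\mathfrak D$ with initial exponent $(-d_1,-d_2)$, final exponent $(ka-d_1,kb-d_2)$ and no bend on the positive coordinate axes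 has exactly one bend. *)

(* Defs.v *)
From HB Require Import structures.
From mathcomp Require Import all_boot all_order all_algebra.
From mathcomp Require Import mpoly.
From mathcomp Require Import reals Rstruct.

Set Implicit Arguments.
Unset Strict Implicit.
Unset Printing Implicit Defensive.

Import Order.TTheory GRing.Theory Num.Theory.
Local Open Scope ring_scope.

Section ScatteringDiagram.
Variables (K : fieldType) (l1 l2 : nat).
Local Notation n := (l1 + l2)%N.

Definition PS := 'X_{1..n} -> K.
Definition ps0 : PS := fun _ => 0.
Definition ps1 : PS := fun e => (e == 0%MM)%:R.
Definition psmul (u v : PS) : PS := fun e =>
  \sum_(e1 : 'X_{1..n < (mdeg e).+1})
   \sum_(e2 : 'X_{1..n < (mdeg e).+1} | (bmnm e1 + bmnm e2 == e)%MM)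
      u (bmnm e1) * v (bmnm e2).

Definition PSz := nat -> PS.
Definition psz1 : PSz := fun j => if j == 0%N then ps1 else ps0.
Definition pszmul (F G : PSz) : PSz := fun j e =>
  \sum_(i < j.+1) psmul (F i) (G (j - i)%N) e.
Definition pszexp (F : PSz) (w : nat) : PSz := iter w (pszmul F) psz1.

Definition isP1 (e : 'X_{1..n}) (j : nat) : bool :=
  (1 <= j <= l1)%N && [exists i : 'I_n, (val i == j.-1) && (e == U_(i))%MM].
Definition isP2 (e : 'X_{1..n}) (j : nat) : bool :=
  (1 <= j <= l2)%N && [exists i : 'I_n, (val i == l1 + j.-1)%N && (e == U_(i))%MM].

Definition RayData := nat -> nat -> nat -> PS.

Inductive wall := WL1 | WL2 | WRay of nat & nat.

Definition valid_wall (W : wall) : bool :=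
  if W is WRay a b then [&& (0 < a)%N, (0 < b)%N & coprime a b] else true.

Definition wdir (W : wall) : nat * nat :=
  match W with WL1 => (1, 0)%N | WL2 => (0, 1)%N | WRay a b => (a, b) end.

Definition wfun (c : RayData) (W : wall) : PSz := fun j =>
  if j == 0%N then ps1 else
  match W with
  | WL1 => fun e => (isP1 e j)%:R
  | WL2 => fun e => (isP2 e j)%:R
  | WRay a b => c a b j
  end.

Definition wpair (W : wall) (m : int * int) : int :=
  match W with
  | WL1 => m.2
  | WL2 => m.1
  | WRay a b => b%:Z * m.1 - a%:Z * m.2
  end.

Definition T := {mpoly K[n + 2]}.
Definition Xp (i : 'I_n) : T := 'X_(lshift 2 i).
Definition Xx : T := 'X_(rshift n (0 : 'I_2)).
Definition Xy : T := 'X_(rshift n (1 : 'I_2)).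
Definition pmon (e : 'X_{1..n}) : T := \prod_(i < n) Xp i ^+ e i.
Definition trunc (N : nat) (u : PS) : T :=
  \sum_(e : 'X_{1..n < N}) u (bmnm e) *: pmon (bmnm e).

Definition twall (c : RayData) (N B : nat) (W : wall) : T :=
  1 + \sum_(1 <= j < B.+1)
        trunc N (wfun c W j) * (Xx ^+ (j * (wdir W).1) * Xy ^+ (j * (wdir W).2)).

Definition good_bound (c : RayData) (N B : nat) : Prop :=
  forall W j (e : 'X_{1..n}), valid_wall W -> (0 < j)%N -> (mdeg e < N)%N ->
    wfun c W j e != 0 ->
    [/\ (j <= B)%N, ((wdir W).1 <= B)%N & ((wdir W).2 <= B)%N].

Definition tinv (N : nat) (f : T) : T := \sum_(j < N) (1 - f) ^+ j.
Definition spow (N : nat) (f : T) (z : int) : T :=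
  match z with Posz k => f ^+ k | Negz k => tinv N f ^+ k.+1 end.

Definition cross_img (N : nat) (f : T) (nx ny : int) : (n + 2).-tuple T :=
  [tuple match split i with
         | inl j => Xp j
         | inr j => if val j == 0%N then Xx * spow N f nx else Xy * spow N f ny
         end | i < n + 2].

Definition cross (N : nat) (f : T) (nx ny : int) (G : T) : T :=
  comp_mpoly (cross_img N f nx ny) G.

Definition rays (B : nat) : seq (nat * nat) :=
  sort (fun p q : nat * nat => (p.2 * q.1 <= q.2 * p.1)%N)
    [seq (a, b) | a <- iota 1 B, b <- [seq b <- iota 1 B | coprime a b]].

Definition loop_walls (B : nat) : seq (wall * int * int) :=
  [:: (WL2, 1, 0); (WL1, 0, 1)] ++
  [seq (WRay ab.1 ab.2, - (ab.2%:Z), ab.1%:Z) | ab <- rays B] ++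
  [:: (WL2, -1, 0); (WL1, 0, -1)].

Definition path_prod (c : RayData) (N B : nat) (G : T) : T :=
  foldl (fun G w => cross N (twall c N B w.1.1) w.1.2 w.2 G) G (loop_walls B).

Definition congJ (N : nat) (G H : T) : Prop :=
  forall m : 'X_{1..n + 2},
    (\sum_(i < n) m (lshift 2 i) < N)%N -> G@_m = H@_m.

Definition is_scat (c : RayData) : Prop :=
  [/\ (forall a b k, (0 < k)%N -> c a b k 0%MM = 0),
      (forall N, exists B, good_bound c N B) &
      (forall N B, good_bound c N B ->
         congJ N (path_prod c N B Xx) Xx /\ congJ N (path_prod c N B Xy) Xy)].

Local Notation R := Rdefinitions.R.

Definition on_wall (W : wall) (P : R * R) : Prop :=
  match W with
  | WL1 => P.2 = 0
  | WL2 => P.1 = 0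
  | WRay a b => exists t : R, 0 <= t /\ P = (- (t * a%:R), - (t * b%:R))
  end.

Definition in_piece (tau : seq R) (i : nat) (t : R) : Prop :=
  [/\ t <= 0, (i = 0%N \/ nth 0 tau i.-1 <= t) & (i = size tau \/ t <= nth 0 tau i)].

Definition is_broken_line (c : RayData) (m0 : int * int) (Q : R * R)
    (tau : seq R) (ms : seq (int * int)) (cs : seq PS) (beta : R -> R * R) : Prop :=
  [/\ [/\ size ms = (size tau).+1, size cs = (size tau).+1,
         nth (0, 0) ms 0 = m0 & nth ps0 cs 0 = ps1],
      sorted (fun s t => s < t) tau /\ all (fun t => t < 0) tau,
      beta 0 = Q /\ (forall t, t <= 0 -> beta t <> (0, 0)),
      (forall i s t, (i <= size tau)%N -> in_piece tau i s -> in_piece tau i t ->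
         let m := nth (0, 0) ms i in
         beta t = ((beta s).1 - (t - s) * m.1%:~R, (beta s).2 - (t - s) * m.2%:~R)) &
      (forall i, (i < size tau)%N ->
         let m := nth (0, 0) ms i in
         let m' := nth (0, 0) ms i.+1 in
         exists W, [/\ valid_wall W, on_wall W (beta (nth 0 tau i)),
           (0 < `|wpair W m|)%N &
           exists j, [/\ (0 < j)%N,
             m' = (m.1 + (j * (wdir W).1)%:Z, m.2 + (j * (wdir W).2)%:Z),
             nth ps0 cs i.+1 = psmul (nth ps0 cs i) (pszexp (wfun c W) `|wpair W m| j) &
             exists e, nth ps0 cs i.+1 e != 0]])].

Definition on_pos_axis (P : R * R) : Prop :=
  (P.2 = 0 /\ 0 < P.1) \/ (P.1 = 0 /\ 0 < P.2).

Definition one_bending (c : RayData) (d1 d2 a b k : nat) : Prop :=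
  forall Q tau ms cs beta,
    is_broken_line c (- (d1%:Z), - (d2%:Z)) Q tau ms cs beta ->
    last (- (d1%:Z), - (d2%:Z)) ms = ((k * a)%:Z - d1%:Z, (k * b)%:Z - d2%:Z) ->
    (forall i, (i < size tau)%N -> ~ on_pos_axis (beta (nth 0 tau i))) ->
    size tau = 1%N.

End ScatteringDiagram.

(* Main.v *)
Require Import Defs.
From HB Require Import structures.
From mathcomp Require Import all_boot all_order all_algebra.
From mathcomp Require Import mpoly.
From mathcomp Require Import reals Rstruct.
From mathcomp Require Import zify ring lra.
Import Order.TTheory GRing.Theory Num.Theory.
Local Open Scope ring_scope.

Definition crossZ (x y : int * int) : int := x.1 * y.2 - x.2 * y.1.
Definition wZ (w : nat * nat) : int * int := ((w.1)%:Z, (w.2)%:Z).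

From Stdlib Require Import ClassicalEpsilon.
Lemma LA (s : int) (e w w' : nat * nat) : (s = 1 \/ s = -1) -> (0 < e.1 + e.2)%N ->
  0 < s * crossZ (wZ w') (wZ w) -> s * crossZ (wZ e) (wZ w) <= 0 ->
  s * crossZ (wZ e) (wZ w') < 0.
Proof.
case: e w w' => [e1 e2] [p q] [p' q']; rewrite /crossZ /wZ /=.
move=> [->|->] he; rewrite ?mul1r ?mulN1r; nia.
Qed.

Lemma core (l : nat) (m : nat -> int*int) (w : nat -> nat*nat) (j : nat -> nat)
  (s : int) (a b k d1 d2 : nat) :
  (s = 1 \/ s = -1) -> (0 < a + b)%N ->
  (forall i, (i < l)%N -> [/\ m i.+1 = ((m i).1 + (j i * (w i).1)%N%:Z,
        (m i).2 + (j i * (w i).2)%N%:Z), (0 < j i)%N & s * crossZ (wZ (w i)) (m i) < 0]) ->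
  (forall i, (i.+1 < l)%N -> 0 < s * crossZ (wZ (w i.+1)) (wZ (w i))) ->
  m 0%N = (- d1%:Z, - d2%:Z) -> m l = ((k*a)%N%:Z - d1%:Z, (k*b)%N%:Z - d2%:Z) ->
  (2 <= l)%N ->
  (s = 1 -> forall p q : nat, (p <= k*a)%N -> 0 < a%:Z * q%:Z - b%:Z * p%:Z ->
     0 < p%:Z * d2%:Z - q%:Z * d1%:Z -> False) ->
  (s = -1 -> forall p q : nat, (q <= k*b)%N -> 0 < p%:Z * b%:Z - q%:Z * a%:Z ->
     0 < d1%:Z * q%:Z - d2%:Z * p%:Z -> False) ->
  False.
Proof.
move=> hs hab Hst Hrot Hm0 Hml hl HL HR.
have C : 0 < s * crossZ (wZ (a, b)) (wZ (w 0%N)).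
  rewrite ltNge; apply/negP => H0.
  have Hneg : forall i, (0 < i)%N -> (i < l)%N -> s * crossZ (wZ (a, b)) (wZ (w i)) < 0.
    elim=> [//|i IH] _ hi.
    apply: (LA s (a, b) (w i) (w i.+1)) => //; first exact: Hrot.
    case: i IH hi => [|i] IH hi; first exact: H0.
    by apply: ltW; apply: IH => //; apply: ltnW.
  pose f i := s * crossZ (wZ (a, b)) (m i).
  have fS : forall i, (i < l)%N -> f i.+1 = f i + (j i)%:Z * (s * crossZ (wZ (a, b)) (wZ (w i))).
    move=> i hi; rewrite /f; case: (Hst i hi) => -> _ _.
    rewrite /crossZ /wZ /=; rewrite !PoszM; ring.
  have Hf : forall i, (i <= l)%N -> (0 < i)%N -> f i <= f 0%N /\ ((1 < i)%N -> f i < f 0%N).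
    elim=> [//|i IH] hi _.
    rewrite fS //; move: (Hst i hi) => [_ hj _].
    case: i IH hi hj => [|i] IH hi hj.
      split=> //; rewrite -[leRHS]addr0 lerD2l; apply: mulr_ge0_le0 => //.
    have [IH1 IH2] := IH (ltnW hi) isT.
    have := Hneg i.+1 isT hi; move=> hn.
    have : (j i.+1)%:Z * (s * crossZ (wZ (a, b)) (wZ (w i.+1))) < 0.
      by rewrite pmulr_rlt0 // ltz_nat.
    move=> hneg; split; lra.
  have [_ Hlt] := Hf l (leqnn l) (ltnW hl).
  have := Hlt hl; rewrite /f Hml Hm0 /crossZ /wZ /= !PoszM.
  case: hs => ->; nia.
have Hmono : forall i, (i <= l)%N -> (0 < i)%N -> (m 1%N).1 <= (m i).1 /\ (m 1%N).2 <= (m i).2.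
  elim=> [//|i IH] hi _.
  case: i IH hi => [|i] IH hi; first by [].
  have [IH1 IH2] := IH (ltnW hi) isT.
  case: (Hst i.+1 hi) => -> _ _ /=; split; lia.
have [M1 M2] := Hmono l (leqnn l) (ltnW hl).
have [E1 hj0 G0] := Hst 0%N (ltnW hl).
move: M1 M2 C G0; rewrite Hml E1 Hm0 /crossZ /wZ /=.
case: (w 0%N) => p q /= M1 M2 C G0.
case: hs => hs.
  apply: (HL hs p q); move: C G0; rewrite hs; nia.
apply: (HR hs p q); move: C G0; rewrite hs; nia.
Qed.
Lemma bend_data (K : fieldType) (l1 l2 : nat) (c : RayData K l1 l2) m0 Q tau ms cs beta :
  is_broken_line c m0 Q tau ms cs beta ->
  (forall i, (i < size tau)%N -> ~ on_pos_axis (beta (nth 0 tau i))) ->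
  forall i, (i < size tau)%N ->
  exists (W : wall) (j : nat) (t : Rdefinitions.R), [/\ (0 < j)%N,
     nth (0,0) ms i.+1 = ((nth (0,0) ms i).1 + (j * (wdir W).1)%N%:Z,
                          (nth (0,0) ms i).2 + (j * (wdir W).2)%N%:Z),
     0 < t, beta (nth 0 tau i) = (- (t * ((wdir W).1)%:R), - (t * ((wdir W).2)%:R)) &
     crossZ (wZ (wdir W)) (nth (0,0) ms i) != 0].
Proof.
move=> [_ [_ Hall] [_ Hne] _ Hb] Hax i hi.
have [W [vW onW hpair [j [hj hm _ _]]]] := Hb i hi.
have hneg : nth 0 tau i < 0 by move/(all_nthP 0): Hall; apply.
have Hne' := Hne _ (ltW hneg).
have Hax' := Hax i hi.
move: onW Hne' Hax' hpair.
case: (beta (nth 0 tau i)) => x y.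
case: W vW hm => [|| a b] vW hm /=.
- move=> hy hne hax; rewrite absz_gt0 => hp; exists WL1, j.
  exists (- x); split => //.
  + have hx0 : x != 0 by apply/eqP => hx0; apply: hne; rewrite hx0 hy.
    rewrite oppr_gt0 lt_neqAle hx0 /= leNgt; apply/negP => h; apply: hax; left; split => //.
  + by rewrite hy mulr1n mulr0n mulr1 mulr0 oppr0 opprK.
  + by rewrite /crossZ /wZ /= mul1r mul0r subr0.
- move=> hx hne hax; rewrite absz_gt0 => hp; exists WL2, j.
  exists (- y); split => //.
  + have hy0 : y != 0 by apply/eqP => hy0; apply: hne; rewrite hy0 hx.
    rewrite oppr_gt0 lt_neqAle hy0 /= leNgt; apply/negP => h; apply: hax; right; split => //.
  + by rewrite hx mulr1n mulr0n mulr1 mulr0 oppr0 opprK.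
  + by rewrite /crossZ /wZ /= mul1r mul0r sub0r oppr_eq0.
- move=> [t [ht [-> ->]]] hne hax; rewrite absz_gt0 => hp; exists (WRay a b), j.
  exists t; split => //.
  + rewrite lt_neqAle ht andbT; apply/eqP => ht0.
    by apply: hne; rewrite -ht0 !mul0r oppr0.
  + rewrite /crossZ /wZ /=; apply: contraNneq hp => h.
    by rewrite -oppr_eq0 opprB h.
Qed.
Lemma rot_real (R : realFieldType) (t t' lam p q p' q' M1 M2 N1 N2 J : R) :
  0 < t -> 0 < t' -> 0 < lam ->
  N1 = M1 + J * p -> N2 = M2 + J * q ->
  - (t' * p') = - (t * p) - lam * N1 -> - (t' * q') = - (t * q) - lam * N2 ->
  (p * M2 - q * M1 != 0 -> (p' * q - q' * p) * (p * M2 - q * M1) < 0) /\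
  (p' * N2 - q' * N1 != 0 -> (p' * q - q' * p) * (p' * N2 - q' * N1) < 0).
Proof.
move=> ht ht' hl EN1 EN2 e1 e2.
have k1 : t' * (p' * q - q' * p) = - (lam * (p * M2 - q * M1)).
  have -> : t' * (p' * q - q' * p) = (t' * p') * q - (t' * q') * p by ring.
  have -> : t' * p' = t * p + lam * N1 by lra.
  have -> : t' * q' = t * q + lam * N2 by lra.
  rewrite EN1 EN2; ring.
have k2 : t * (p' * q - q' * p) = - (lam * (p' * N2 - q' * N1)).
  have -> : t * (p' * q - q' * p) = - ((t * p) * q' - (t * q) * p') by ring.
  have -> : t * p = t' * p' - lam * N1 by lra.
  have -> : t * q = t' * q' - lam * N2 by lra.
  ring.
have sg : forall X g u, 0 < u -> u * X = - (lam * g) -> g != 0 -> X * g < 0.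
  move=> X g u hu k; rewrite neq_lt => /orP [hg|hg].
  - have h : 0 < u * X by rewrite k oppr_gt0 pmulr_rlt0.
    rewrite pmulr_rgt0 // in h; by rewrite pmulr_rlt0.
  - have h : u * X < 0 by rewrite k oppr_lt0 pmulr_rgt0.
    rewrite pmulr_rlt0 // in h; by rewrite nmulr_rlt0.
split; [exact: (sg _ _ t') | exact: (sg _ _ t)].
Qed.
Lemma PoszR (R : pzRingType) (n : nat) : (n%:Z)%:~R = n%:R :> R.
Proof. by []. Qed.

Lemma nat_choice (A : Type) (a0 : A) (n : nat) (P : nat -> A -> Prop) :
  (forall i, (i < n)%N -> exists x, P i x) ->
  exists f : nat -> A, forall i, (i < n)%N -> P i (f i).
Proof.
move=> h.
have h' : forall i, exists x, (i < n)%N -> P i x.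
  move=> i; case: (boolP (i < n)%N) => hi.
  - by have [x hx] := h i hi; exists x.
  - by exists a0.
exists (fun i => proj1_sig (constructive_indefinite_description _ (h' i))).
move=> i hi; exact: (proj2_sig (constructive_indefinite_description _ (h' i)) hi).
Qed.

Lemma sgn_int (s X g g' : int) : (s = 1 \/ s = -1) -> s * g < 0 -> X * g < 0 ->
  X * g' < 0 -> s * g' < 0 /\ 0 < s * X.
Proof. by case=> ->; rewrite ?mul1r ?mulN1r; nia. Qed.

Lemma ob_general (K : fieldType) (l1 l2 : nat) (c : RayData K l1 l2) (d1 d2 a b k : nat) :
  (0 < a + b)%N -> (0 < k)%N ->
  (forall p q : nat, (p <= k*a)%N -> 0 < a%:Z * q%:Z - b%:Z * p%:Z ->
     0 < p%:Z * d2%:Z - q%:Z * d1%:Z -> False) ->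
  (forall p q : nat, (q <= k*b)%N -> 0 < p%:Z * b%:Z - q%:Z * a%:Z ->
     0 < d1%:Z * q%:Z - d2%:Z * p%:Z -> False) ->
  one_bending c d1 d2 a b k.
Proof.
move=> hab hk HL HR Q tau ms cs beta H Hlast Hax.
have H' := H; case: H' => [[Hsz _ Hm0 _] [Hsort Hall] _ Hpiece _].
have Hch : forall i, (i < size tau)%N -> exists x : wall * nat * Rdefinitions.R,
  [/\ (0 < x.1.2)%N,
     nth (0,0) ms i.+1 = ((nth (0,0) ms i).1 + (x.1.2 * (wdir x.1.1).1)%N%:Z,
                          (nth (0,0) ms i).2 + (x.1.2 * (wdir x.1.1).2)%N%:Z),
     0 < x.2, beta (nth 0 tau i) = (- (x.2 * ((wdir x.1.1).1)%:R), - (x.2 * ((wdir x.1.1).2)%:R)) &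
     crossZ (wZ (wdir x.1.1)) (nth (0,0) ms i) != 0].
  move=> i hi.
  by have [W [j [t h]]] := @bend_data _ _ _ _ _ _ _ _ _ _ H Hax i hi; exists (W, j, t).
have [F HF] := @nat_choice (wall * nat * Rdefinitions.R) (WL1, 0%N, 0) _ _ Hch.
pose m i := nth (0,0) ms i.
pose w i := wdir (F i).1.1.
pose jj i := (F i).1.2.
have Hml : m (size tau) = ((k * a)%N%:Z - d1%:Z, (k * b)%N%:Z - d2%:Z).
  rewrite -Hlast -nth_last Hsz /= /m; apply: set_nth_default; rewrite Hsz //.
have [hl|hl|->] := ltngtP (size tau) 1; last by [].
- have hl0 : size tau = 0%N by case: (size tau) hl.
  move: Hml; rewrite hl0 /m Hm0 => -[e1 e2].
  have : (k * a = 0)%N by lia.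
  have : (k * b = 0)%N by lia.
  move: hab hk; clear; nia.
exfalso.
have Hrot : forall i, (i.+1 < size tau)%N ->
    crossZ (wZ (w i.+1)) (wZ (w i)) * crossZ (wZ (w i)) (m i) < 0 /\
    crossZ (wZ (w i.+1)) (wZ (w i)) * crossZ (wZ (w i.+1)) (m i.+1) < 0.
  move=> i hi.
  have [hj hmi ht hbi hgi] := HF i (ltnW hi).
  have [hj' hmi' ht' hbi' hgi'] := HF i.+1 hi.
  have hT : nth 0 tau i < nth 0 tau i.+1.
    by apply: (sorted_ltn_nth lt_trans) => //; rewrite inE // ltnW.
  have hneg : nth 0 tau i.+1 < 0 by move/(all_nthP 0): Hall; apply.
  have E := Hpiece i.+1 (nth 0 tau i) (nth 0 tau i.+1) (ltnW hi).
  have E' : beta (nth 0 tau i.+1) = ((beta (nth 0 tau i)).1 - (nth 0 tau i.+1 - nth 0 tau i) * (m i.+1).1%:~R,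
     (beta (nth 0 tau i)).2 - (nth 0 tau i.+1 - nth 0 tau i) * (m i.+1).2%:~R).
    apply: E.
    - split; [lra | by right | by right; apply: ltW].
    - split; [lra | by right; apply: ltW | by right].
  rewrite hbi hbi' in E'.
  have e1 := congr1 fst E'; have e2 := congr1 snd E'; simpl in e1, e2.
  have hlam : 0 < nth 0 tau i.+1 - nth 0 tau i by rewrite subr_gt0.
  have := @rot_real _ _ _ _ _ _ _ _ ((m i).1%:~R) ((m i).2%:~R) _ _ (jj i)%:R ht ht' hlam _ _ e1 e2.
  rewrite /m hmi /= !intrD !PoszR !natrM => /(_ erefl erefl) [r1 r2].
  rewrite -!(ltrz0 Rdefinitions.R) /crossZ /wZ /w /= !(intrM, intrB, intrD, PoszR, natrM).
  split.
  - apply: r1; move: hgi; rewrite -(intr_eq0 Rdefinitions.R) /crossZ /wZ /=.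
    by rewrite !(intrM, intrB, PoszR).
  - apply: r2; move: hgi'; rewrite hmi -(intr_eq0 Rdefinitions.R) /crossZ /wZ /=.
    by rewrite !(intrM, intrB, intrD, PoszR, natrM).
pose s : int := if crossZ (wZ (w 0%N)) (m 0%N) < 0 then 1 else -1.
have hs : s = 1 \/ s = -1 by rewrite /s; case: ifP; [left|right].
have Hsg : forall i, (i < size tau)%N -> s * crossZ (wZ (w i)) (m i) < 0.
  elim=> [|i IH] hi.
  - have [_ _ _ _ hg] := HF 0%N hi.
    rewrite /s /w /m; case: ifP => h; first by rewrite mul1r.
    rewrite mulN1r oppr_lt0 lt_neqAle eq_sym hg /= leNgt.
    by move: h; rewrite /w /m => ->.
  - have [r1 r2] := Hrot i hi.
    by have [] := sgn_int _ _ _ _ hs (IH (ltnW hi)) r1 r2.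
apply: (@core (size tau) m w jj s a b k d1 d2 hs hab) => //.
- move=> i hi; have [hj hmi _ _ _] := HF i hi.
  by split => //; apply: Hsg.
- move=> i hi; have [r1 r2] := Hrot i hi.
  by have [] := sgn_int _ _ _ _ hs (Hsg i (ltnW hi)) r1 r2.
Qed.
Lemma t1L (a b k p q : nat) : (p <= k*a)%N -> 0 < a%:Z * q%:Z - b%:Z * p%:Z ->
     0 < p%:Z * (k * b ^ 2)%N%:Z - q%:Z * (k * a * b).+1%:Z -> False.
Proof. nia. Qed.
Lemma t1R (a b k p q : nat) : (q <= k*b)%N -> 0 < p%:Z * b%:Z - q%:Z * a%:Z ->
     0 < (k * a * b).+1%:Z * q%:Z - (k * b ^ 2)%N%:Z * p%:Z -> False.
Proof. nia. Qed.

Lemma absz_lt (x y : nat) : (x < y)%N -> absz (x%:Z - y%:Z) = (y - x)%N.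
Proof. lia. Qed.
Lemma absz_gt (x y : nat) : (y < x)%N -> absz (x%:Z - y%:Z) = (x - y)%N.
Proof. lia. Qed.

Lemma t2L (a b k d1 d2 p q : nat) : (d1 * b != d2 * a)%N ->
  ((d1*b < d2*a)%N -> (absz ((d1*b)%:Z - (d2*a)%:Z) * k * a <= d1)%N) ->
  (p <= k*a)%N -> 0 < a%:Z * q%:Z - b%:Z * p%:Z ->
     0 < p%:Z * d2%:Z - q%:Z * d1%:Z -> False.
Proof.
move=> hne h1 hp hY hX.
have e : a%:Z * (p%:Z * d2%:Z - q%:Z * d1%:Z) =
   p%:Z * ((d2 * a)%N%:Z - (d1 * b)%N%:Z) - d1%:Z * (a%:Z * q%:Z - b%:Z * p%:Z).
  rewrite !PoszM; ring.
have ha : (0 < a)%N by rewrite lt0n; apply/eqP => a0; move: hY; rewrite a0; nia.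
have [h|h|h] := ltngtP (d1*b) (d2*a); last by rewrite h eqxx in hne.
- move: (h1 h); rewrite absz_lt //.
  have hM := subnK (ltnW h).
  move: hM e; set M := (d2 * a - d1 * b)%N.
  move: M => M hM e hM2.
  rewrite -hM PoszD addrK in e.
  have hpM : (p * M <= k * a * M)%N by apply: leq_mul.
  nia.
- nia.
Qed.

Lemma t2R (a b k d1 d2 p q : nat) : (d1 * b != d2 * a)%N ->
  ((d2*a < d1*b)%N -> (absz ((d1*b)%:Z - (d2*a)%:Z) * k * b <= d2)%N) ->
  (q <= k*b)%N -> 0 < p%:Z * b%:Z - q%:Z * a%:Z ->
     0 < d1%:Z * q%:Z - d2%:Z * p%:Z -> False.
Proof.
move=> hne h1 hq hY hX.
have e : b%:Z * (d1%:Z * q%:Z - d2%:Z * p%:Z) =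
   q%:Z * ((d1 * b)%N%:Z - (d2 * a)%N%:Z) - d2%:Z * (p%:Z * b%:Z - q%:Z * a%:Z).
  rewrite !PoszM; ring.
have hb : (0 < b)%N by rewrite lt0n; apply/eqP => b0; move: hY; rewrite b0; nia.
have [h|h|h] := ltngtP (d1*b) (d2*a); last by rewrite h eqxx in hne.
- nia.
- move: (h1 h); rewrite absz_gt //.
  have hM := subnK (ltnW h).
  move: hM e; set M := (d1 * b - d2 * a)%N.
  move: M => M hM e hM2.
  rewrite -hM PoszD addrK in e.
  have hqM : (q * M <= k * b * M)%N by apply: leq_mul.
  nia.
Qed.
Lemma t1'L (a b k p q : nat) : (p <= k*a)%N -> 0 < a%:Z * q%:Z - b%:Z * p%:Z ->
     0 < p%:Z * (k * a * b).+1%:Z - q%:Z * (k * a ^ 2)%N%:Z -> False.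
Proof. nia. Qed.
Lemma t1'R (a b k p q : nat) : (q <= k*b)%N -> 0 < p%:Z * b%:Z - q%:Z * a%:Z ->
     0 < (k * a ^ 2)%N%:Z * q%:Z - (k * a * b).+1%:Z * p%:Z -> False.
Proof. nia. Qed.

Theorem corollary5p12 (K : fieldType) (l1 l2 : nat) (c : RayData K l1 l2) :
  [pchar K] =i pred0 -> (0 < l1)%N -> (0 < l2)%N -> is_scat c ->
  forall a b k : nat, coprime a b -> (0 < k)%N ->
  [/\ one_bending c (k * a * b).+1 (k * b ^ 2) a b k /\
      one_bending c (k * a ^ 2) (k * a * b).+1 a b k,
      (forall d1 d2 : nat, (d1 * b != d2 * a)%N ->
         let m := absz ((d1 * b)%:Z - (d2 * a)%:Z) in
         ((d1 * b < d2 * a)%N -> (m * k * a <= d1)%N) ->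
         ((d2 * a < d1 * b)%N -> (m * k * b <= d2)%N) ->
         one_bending c d1 d2 a b k) &
      (forall m : nat, (0 < m)%N -> forall M : nat,
         exists d1 d2 : nat,
           [/\ (M < d1 + d2)%N,
               m = absz ((d1 * b)%:Z - (d2 * a)%:Z) &
               one_bending c d1 d2 a b k])].
Proof.
move=> _ _ _ _ a b k cop hk.
have hab : (0 < a + b)%N.
  by move: cop; case: a => [|a]; case: b => [|b] //; rewrite /coprime gcdn0.
have P2 : forall d1 d2 : nat, (d1 * b != d2 * a)%N ->
         let m := absz ((d1 * b)%:Z - (d2 * a)%:Z) in
         ((d1 * b < d2 * a)%N -> (m * k * a <= d1)%N) ->
         ((d2 * a < d1 * b)%N -> (m * k * b <= d2)%N) ->
         one_bending c d1 d2 a b k.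
  move=> d1 d2 hne m h1 h2; apply: ob_general => // p q.
  - exact: t2L hne h1.
  - exact: t2R hne h2.
split.
- split; apply: ob_general => // p q.
  + exact: t1L.
  + exact: t1R.
  + exact: t1'L.
  + exact: t1'R.
- exact: P2.
move=> m hm M.
have [b0|bpos] := posnP b.
- have a1 : a = 1%N by move: cop; rewrite b0 /coprime gcdn0 => /eqP.
  exists (m * k + M)%N, m; split.
  + nia.
  + rewrite b0 a1 muln0 muln1; lia.
  + apply: P2; rewrite b0 a1 ?muln0 ?muln1 /=; lia.
have [x _ hx] := Bezoutr a bpos.
move/eqP: cop => cop; rewrite cop in hx.
pose d2 := (m * x + b * (m * k + M))%N.
have hdiv : (b %| d2 * a + m)%N.
  have -> : (d2 * a + m = m * (1 + x * a) + b * ((m * k + M) * a))%N.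
    by rewrite /d2; ring.
  by apply: dvdn_add; [apply: dvdn_mull | apply: dvdn_mulr].
pose d1 := ((d2 * a + m) %/ b)%N.
have hd1 : (d1 * b = d2 * a + m)%N by rewrite /d1 divnK.
exists d1, d2; split.
- rewrite /d2; nia.
- rewrite hd1; lia.
- apply: P2; rewrite hd1 /=.
  + lia.
  + lia.
  + move=> _; rewrite /d2; nia.
Qed.
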